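(* Let $\mu\in\mathbb F_q\setminus\{0\}$. If $g$ is a generator of $\mathcal W_0$ such that $g\cap\Delta$ is an $(n-2)$-space, then $g\cap\mathcal Q_\mu$ is a cone whose vertex is an $(n-3)$-space (empty if $n=2$) and whose base is a non-degenerate conic.
   Context: Let $q$ be an even prime power and $n\ge 2$ an integer. Let $\mathrm{PG}(2n+1,q)$ have homogeneous coordinates $(X_1,\dots,X_{2n+2})$. Fix $\delta\in\mathbb F_q$ such that $X^2+X+\delta$ is irreducible over $\mathbb F_q$. For $\mu\in\mathbb F_q$ let $\mathcal Q_\mu$ be the quadric $X_1^2+X_1X_{2n+2}+\delta X_{2n+2}^2+\sum_{i=2}^{n+1}X_iX_{2n+3-i}+\mu(X_{2n}^2+X_{2n}X_{2n+1}+\delta X_{2n+1}^2)=0$ (an elliptic quadric $\mathcal Q^-(2n+1,q)$), and $\perp_\mu$ the symplectic polarity defined by the alternating form $B_\mu(X,Y)=\sum_{i=1}^{2n+2}X_iY_{2n+3-i}+\mu(X_{2n}Y_{2n+1}+X_{2n+1}Y_{2n})$ (the polarity associated with $\mathcal Q_\mu$). Let $\mathcal W_\mu$ be the associated symplectic polar space; its generators are the totally isotropic $n$-spaces. Let $\Delta$ be the $(2n-1)$-space $X_{2n}=X_{2n+1}=0$. A $(-1)$-space is the empty set. *)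

(* Defs.v *)
From HB Require Import structures.
From mathcomp Require Import all_boot all_order all_algebra.
Set Implicit Arguments. Unset Strict Implicit. Unset Printing Implicit Defensive.
Import GRing.Theory.
Local Open Scope ring_scope.

(* Vectors of F^(2n+2) are row vectors 'rV[F]_(n.*2.+2);
   the paper's coordinate X_i (1 <= i <= 2n+2) is stored at index i-1. *)
Definition Xc (F : fieldType) (n : nat) (x : 'rV[F]_(n.*2.+2)) (i : nat) : F :=
  x 0 (inord i.-1).

Definition Qform (F : fieldType) (n : nat) (delta mu : F)
    (x : 'rV[F]_(n.*2.+2)) : F :=
  let X := Xc x in
  X 1%N ^+ 2 + X 1%N * X (n.*2.+2) + delta * X (n.*2.+2) ^+ 2
  + \sum_(2 <= i < n.+2) X i * X (n.*2.+3 - i)%N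
  + mu * (X (n.*2) ^+ 2 + X (n.*2) * X (n.*2.+1) + delta * X (n.*2.+1) ^+ 2).
Arguments Qform {F} n delta mu x.

Definition Bform (F : fieldType) (n : nat) (mu : F)
    (x y : 'rV[F]_(n.*2.+2)) : F :=
  \sum_(1 <= i < n.*2.+3) Xc x i * Xc y (n.*2.+3 - i)%N
  + mu * (Xc x (n.*2) * Xc y (n.*2.+1) + Xc x (n.*2.+1) * Xc y (n.*2)).
Arguments Bform {F} n mu x y.

(* Generators of W_mu: totally isotropic n-spaces, i.e. (n+1)-dimensional
   vector subspaces on which B_mu vanishes identically. *)
Definition is_generator (F : fieldType) (n : nat) (mu : F)
    (g : {vspace 'rV[F]_(n.*2.+2)}) : Prop :=
  \dim g = n.+1 /\ (forall x y, x \in g -> y \in g -> Bform n mu x y = 0).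
Arguments is_generator {F} n mu g.

(* Delta : X_{2n} = X_{2n+1} = 0, spanned by the remaining unit vectors. *)
Definition Delta (F : fieldType) (n : nat) : {vspace 'rV[F]_(n.*2.+2)} :=
  <<[seq delta_mx (0%R : 'I_1) j | j <- enum 'I_(n.*2.+2) &
       (val j != (n.*2).-1) && (val j != n.*2)]>>%VS.
Arguments Delta F n.

Definition polarQ (F : fieldType) (m : nat) (Q : 'rV[F]_m -> F) (x y : 'rV[F]_m) : F :=
  Q (x + y) - Q x - Q y.

(* The zero set of Q in the plane pi (vector dim 3) is a non-degenerate conic:
   Q restricted to pi is a non-singular quadratic form. *)
Definition nondeg_conic_in (F : fieldType) (m : nat) (Q : 'rV[F]_m -> F)
    (pi : {vspace 'rV[F]_m}) : Prop :=
  \dim pi = 3 /\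
  (forall c, c \in pi -> Q c = 0 -> (forall d, d \in pi -> polarQ Q c d = 0) -> c = 0).

(* The zero set of Q in g is a cone with vertex V (a vector subspace, the
   projective (dim V - 1)-space) and base the conic Q = 0 in the plane pi,
   where g = V (+) pi. *)
Definition is_cone_in (F : fieldType) (m : nat) (Q : 'rV[F]_m -> F)
    (g V pi : {vspace 'rV[F]_m}) : Prop :=
  directv (V + pi) /\ (V + pi)%VS = g /\
  (forall x, x \in g ->
     (Q x = 0 <-> exists v c, [/\ v \in V, c \in pi, Q c = 0 & x = v + c])).

(* Main.v *)
Require Import Defs.
From HB Require Import structures.
From mathcomp Require Import all_boot all_order all_algebra.
From mathcomp Require Import zify ring.
Import GRing.Theory.
Local Open Scope ring_scope.
Set Implicit Arguments. Unset Strict Implicit. Unset Printing Implicit Defensive.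

Lemma XcD (F : fieldType) n (x y : 'rV[F]_(n.*2.+2)) i :
  Xc (x + y) i = Xc x i + Xc y i.
Proof. by rewrite /Xc mxE. Qed.

Lemma XcZ (F : fieldType) n (c : F) (x : 'rV[F]_(n.*2.+2)) i :
  Xc (c *: x) i = c * Xc x i.
Proof. by rewrite /Xc mxE. Qed.

Lemma XcN (F : fieldType) n (x : 'rV[F]_(n.*2.+2)) i :
  Xc (- x) i = - Xc x i.
Proof. by rewrite /Xc mxE. Qed.

Lemma Xc0 (F : fieldType) n i : Xc (0 : 'rV[F]_(n.*2.+2)) i = 0.
Proof. by rewrite /Xc mxE. Qed.

Lemma Bsplit (F : fieldType) n (x y : 'rV[F]_(n.*2.+2)) :
  Bform n 0 x y = Xc x 1 * Xc y (n.*2.+2) + Xc x (n.*2.+2) * Xc y 1 +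
   \sum_(2 <= i < n.+2) (Xc x i * Xc y (n.*2.+3 - i) + Xc y i * Xc x (n.*2.+3 - i)).
Proof.
rewrite /Bform mul0r addr0 big_ltn // big_nat_recr /=; last by lia.
rewrite (@big_cat_nat _ _ _ n.+2) /=; [|lia|lia].
rewrite big_split /=.
have -> : \sum_(n.+2 <= i < n.*2.+2) Xc x i * Xc y (n.*2.+3 - i) =
    \sum_(2 <= i < n.+2) Xc y i * Xc x (n.*2.+3 - i).
  rewrite big_nat_rev /=.
  have -> : n.+2 = (2 + n)%N by lia.
  rewrite big_addn.
  have -> : (n.*2.+2 - n = 2 + n)%N by lia.
  apply: eq_big_nat => i /andP[hi1 hi2].
  by rewrite mulrC; congr (_ * _); apply: congr1; lia.
rewrite subSnn subn1 /=.
ring.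
Qed.

Lemma sqrD2 (F : fieldType) (h2 : (2 \in [pchar F])%N) (a b : F) :
  (a + b) ^+ 2 = a ^+ 2 + b ^+ 2.
Proof. by rewrite sqrrD mulr2n addrr_pchar2 // addr0. Qed.

Lemma BformE (F : fieldType) n mu (x y : 'rV[F]_(n.*2.+2)) :
  Bform n mu x y = Bform n 0 x y +
    mu * (Xc x (n.*2) * Xc y (n.*2.+1) + Xc x (n.*2.+1) * Xc y (n.*2)).
Proof. by rewrite /Bform mul0r addr0. Qed.

Lemma Qpolar (F : fieldType) (h2 : (2 \in [pchar F])%N) n delta mu
    (x y : 'rV[F]_(n.*2.+2)) :
  Qform n delta mu (x + y) = Qform n delta mu x + Qform n delta mu y + Bform n mu x y.
Proof.
rewrite BformE Bsplit /Qform.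
under eq_bigr do rewrite !XcD.
rewrite !XcD !sqrD2 //.
have -> : \sum_(2 <= i < n.+2) (Xc x i + Xc y i) * (Xc x (n.*2.+3 - i) + Xc y (n.*2.+3 - i))
  = \sum_(2 <= i < n.+2) Xc x i * Xc x (n.*2.+3 - i) + \sum_(2 <= i < n.+2) Xc y i * Xc y (n.*2.+3 - i)
   + \sum_(2 <= i < n.+2) (Xc x i * Xc y (n.*2.+3 - i) + Xc y i * Xc x (n.*2.+3 - i)).
  by rewrite -!big_split; apply: eq_bigr => i _ /=; ring.
ring.
Qed.

Lemma QZ (F : fieldType) n delta mu (c : F) (x : 'rV[F]_(n.*2.+2)) :
  Qform n delta mu (c *: x) = c ^+ 2 * Qform n delta mu x.
Proof.
rewrite /Qform; under eq_bigr do rewrite !XcZ.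
rewrite !XcZ.
have -> : \sum_(2 <= i < n.+2) c * Xc x i * (c * Xc x (n.*2.+3 - i)) =
   c ^+ 2 * \sum_(2 <= i < n.+2) Xc x i * Xc x (n.*2.+3 - i).
  by rewrite mulr_sumr; apply: eq_bigr => i _; ring.
ring.
Qed.

Lemma Qmu (F : fieldType) n delta mu (x : 'rV[F]_(n.*2.+2)) :
  Qform n delta mu x = Qform n delta 0 x +
    mu * (Xc x (n.*2) ^+ 2 + Xc x (n.*2) * Xc x (n.*2.+1) + delta * Xc x (n.*2.+1) ^+ 2).
Proof. by rewrite /Qform mul0r addr0. Qed.
Lemma aniso (F : fieldType) (delta : F)
  (hd : irreducible_poly ('X^2 + 'X + delta%:P : {poly F})) (a b : F) :
  a ^+ 2 + a * b + delta * b ^+ 2 = 0 -> a = 0 /\ b = 0.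
Proof.
move=> h.
have [b0|bn0] := eqVneq b 0.
  move: h; rewrite b0 mulr0 expr0n /= mulr0 !addr0 => /eqP; rewrite expf_eq0 /=.
  by move/eqP.
exfalso.
set p : {poly F} := 'X^2 + 'X + delta%:P.
have rz : root p (a / b).
  rewrite /root /p !hornerE.
  have -> : (a / b) ^+ 2 + a / b + delta = (a ^+ 2 + a * b + delta * b ^+ 2) / b ^+ 2.
    by field.
  by rewrite h mul0r.
have hdv : ('X - (a / b)%:P) %| p by rewrite dvdp_XsubCl.
have := apply_irredp hd _ hdv; rewrite size_XsubC => /(_ isT) /eqp_size.
rewrite size_XsubC /p -addrA size_polyDl ?size_polyXn //.
by rewrite size_XaddC.
Qed.

Lemma sqrt_ex (F : finFieldType) (h2 : (2 \in [pchar F])%N) (c : F) :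
  exists r : F, r ^+ 2 = c.
Proof.
have inj : injective (fun r : F => r ^+ 2).
  move=> r s /= e.
  have : (r + s) ^+ 2 = 0.
    by rewrite sqrrD mulr2n addrr_pchar2 // addr0 e addrr_pchar2.
  move/eqP; rewrite expf_eq0 /= => /eqP /(canRL (addrK s)).
  by rewrite add0r oppr_pchar2.
by exists (finv (fun r : F => r ^+ 2) c); rewrite (f_finv inj).
Qed.

Lemma orth_dim (F : fieldType) m (X Y : {vspace 'rV[F]_m}) :
  (forall x y, x \in X -> y \in Y -> \sum_(j < m) x 0 j * y 0 j = 0) ->
  (\dim X + \dim Y <= m)%N.
Proof.
move=> hXY.
set k := \dim X; set b := vbasis X.
pose M : 'M[F]_(m, k) := \matrix_(j, i) b`_i 0 j.
pose T : 'Hom('rV[F]_m, 'rV[F]_k) := linfun (mulmxr M).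
have TE (v : 'rV[F]_m) (i : 'I_k) : T v 0 i = \sum_j v 0 j * b`_i 0 j.
  by rewrite lfunE /= mxE; apply: eq_bigr => j _; rewrite mxE.
have bX (i : 'I_k) : b`_i \in X.
  by apply: vbasis_mem; apply: mem_nth; rewrite size_tuple.
have sYK : (Y <= lker T)%VS.
  apply/subvP => y yY; rewrite memv_ker; apply/eqP/rowP => i.
  rewrite TE mxE.
  transitivity (\sum_j b`_i 0 j * y 0 j); last exact: hXY (bX i) yY.
  by apply: eq_bigr => j _; exact: mulrC.
have fb : free b by apply: basis_free; apply: vbasisP.
have imT : limg T = fullv.
  apply/vspaceP => c; rewrite memvf; apply/memv_imgP.
  exists (\row_j \sum_i c 0 i * coord b i (delta_mx 0 j)); first by rewrite memvf.
  apply/rowP => l; rewrite TE.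
  under eq_bigr do rewrite mxE mulr_suml.
  rewrite exchange_big /=.
  have -> : \sum_i \sum_j c 0 i * coord b i (delta_mx 0 j) * b`_l 0 j =
          \sum_i c 0 i * coord b i b`_l.
    apply: eq_bigr => i0 _.
    rewrite [in RHS](row_sum_delta b`_l) linear_sum mulr_sumr.
    by apply: eq_bigr => j _; rewrite linearZ /=; ring.
  under eq_bigr do rewrite coord_free //.
  rewrite (bigD1 l) //= eqxx mulr1 big1 ?addr0 // => i hi.
  by rewrite eq_sym (negbTE hi) mulr0.
have := limg_ker_dim T fullv.
rewrite capfv.
rewrite imT !dimvf !dim_matrix !mul1r => hd.

have hd2 : (\dim (lker T) + \dim X)%N = m := hd.
move: (dimvS sYK) => h; apply: (@leq_trans (\dim X + \dim (lker T))%N); first by rewrite leq_add2l.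
by rewrite addnC hd2.
Qed.

Definition Sel (F : fieldType) N m (f : 'I_m -> 'I_N) : 'M[F]_(N, m) :=
  \matrix_(i, j) (i == f j)%:R.
Arguments Sel {F N m} f.

Lemma SelE (F : fieldType) N m (f : 'I_m -> 'I_N) (x : 'rV[F]_N) j :
  (x *m Sel f) 0 j = x 0 (f j).
Proof.
rewrite mxE (bigD1 (f j)) //= big1 ?addr0; first by rewrite mxE eqxx mulr1.
by move=> i hi; rewrite mxE (negbTE hi) mulr0.
Qed.

Lemma Xc_eq0 (F : fieldType) n (x : 'rV[F]_(n.*2.+2)) :
  (forall i, (0 < i <= n.*2.+2)%N -> Xc x i = 0) -> x = 0.
Proof.
move=> h; apply/rowP => k; rewrite mxE.
have := h k.+1; rewrite /Xc /= inord_val => -> //.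
Qed.

Lemma Bzero (F : fieldType) (h2 : (2 \in [pchar F])%N) n delta
   (T : {vspace 'rV[F]_(n.*2.+2)}) :
  (forall t, t \in T -> Qform n delta 0 t = 0) ->
  forall t t', t \in T -> t' \in T -> Bform n 0 t t' = 0.
Proof.
move=> hT t t' ht ht'.
have := Qpolar h2 delta 0 t t'.
by rewrite !hT ?rpredD // !add0r => <-.
Qed.

Lemma witt (F : fieldType) (h2 : (2 \in [pchar F])%N) n (delta : F)
  (hd : irreducible_poly ('X^2 + 'X + delta%:P : {poly F}))
  (T : {vspace 'rV[F]_(n.*2.+2)}) :
  (forall t, t \in T -> Qform n delta 0 t = 0) -> (\dim T <= n)%N.
Proof.
move=> hT.
pose hL : 'Hom('rV[F]_(n.*2.+2), 'rV[F]_n) :=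
  linfun (mulmxr (Sel (F:=F) (fun j : 'I_n => inord j.+1 : 'I_(n.*2.+2)))).
pose sg : 'Hom('rV[F]_(n.*2.+2), 'rV[F]_n) :=
  linfun (mulmxr (Sel (F:=F) (fun j : 'I_n => inord (n.*2 - j) : 'I_(n.*2.+2)))).
have hLE x (j : 'I_n) : hL x 0 j = Xc x j.+2 by rewrite lfunE /= SelE.
have sgE x (j : 'I_n) : sg x 0 j = Xc x (n.*2.+1 - j).
  by rewrite lfunE /= SelE /Xc; congr (x 0 (inord _)); lia.
set A := (T :&: lker hL)%VS.
have hA a : a \in A -> [/\ a \in T, forall i, (1 < i < n.+2)%N -> Xc a i = 0,
                         Xc a 1 = 0 & Xc a (n.*2.+2) = 0].
  rewrite memv_cap memv_ker => /andP[aT /eqP ha].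
  have hi : forall i, (1 < i < n.+2)%N -> Xc a i = 0.
    move=> i /andP[i1 i2].
    have hi2 : (i - 2 < n)%N by lia.
    have := hLE a (Ordinal hi2); rewrite ha mxE /=.
    have -> : (i - 2).+2 = i by lia.
    by move=> <-.
  have hq := hT a aT.
  have : Xc a 1 ^+ 2 + Xc a 1 * Xc a (n.*2.+2) + delta * Xc a (n.*2.+2) ^+ 2 = 0.
    move: hq; rewrite /Qform mul0r addr0 big_nat_cond big1 ?addr0 //.
    by move=> i /andP[/andP[i1 i2] _]; rewrite hi ?mul0r // i1 i2.
  by move/(aniso hd) => [-> ->].
have AK : (A :&: lker sg = 0)%VS.
  apply/eqP; rewrite -subv0; apply/subvP => a.
  rewrite memv_cap memv_ker memv0 => /andP[/hA[_ hi h1 hN] /eqP hs].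
  apply/eqP; apply: Xc_eq0 => i /andP[i1 i2].
  have [e1|ne1] := eqVneq i 1%N; first by rewrite e1.
  have [eN|neN] := eqVneq i (n.*2.+2); first by rewrite eN.
  have [il|il] := ltnP i n.+2; first by apply: hi; lia.
  have hi2 : (n.*2.+1 - i < n)%N by lia.
  have := sgE a (Ordinal hi2); rewrite hs mxE /=.
  have -> : (n.*2.+1 - (n.*2.+1 - i) = i)%N by lia.
  by move=> <-.
have d1 := limg_ker_dim hL T.
have d2 := limg_ker_dim sg A.
rewrite AK dimv0 add0n in d2.
have ho := orth_dim (X := (sg @: A)%VS) (Y := (hL @: T)%VS).
have : (\dim (sg @: A) + \dim (hL @: T) <= n)%N.
  apply: ho => _ _ /memv_imgP[a aA ->] /memv_imgP[t tT ->].
  have [aT hi h1 hN] := hA a aA.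
  have := Bzero h2 hT tT aT.
  rewrite Bsplit h1 hN !mulr0 !add0r.
  rewrite big_nat_cond (eq_bigr (fun i => Xc t i * Xc a (n.*2.+3 - i))); last first.
    move=> i /andP[/andP[i1 i2] _].
    have hii : (1 < i < n.+2)%N by rewrite i1 i2.
    by rewrite (hi _ hii) mul0r addr0.
  rewrite -big_nat_cond.
  have -> : (2 = 0 + 2)%N by [].
  rewrite big_addn big_mkord.
  have e : (n.+2 - 2 = n)%N by lia.
  rewrite e => hB; apply: etrans hB.
  apply: eq_bigr => j _; rewrite sgE hLE mulrC.
  by rewrite addn2; congr (_ * Xc _ _); lia.
rewrite d2; move: d1; rewrite /A.
move=> d1 h; rewrite -d1; exact: h.
Qed.

Lemma B0E (F : fieldType) n (x y : 'rV[F]_(n.*2.+2)) :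
  Bform n 0 x y = \sum_(k < n.*2.+2) x 0 k * y 0 (rev_ord k).
Proof.
rewrite /Bform mul0r addr0 big_add1 /= big_mkord.
apply: eq_bigr => i _; rewrite /Xc /= inord_val.
by congr (_ * y 0 _); apply: val_inj; rewrite /= inordK; lia.
Qed.

Lemma B0Dl (F : fieldType) n (x y z : 'rV[F]_(n.*2.+2)) :
  Bform n 0 (x + y) z = Bform n 0 x z + Bform n 0 y z.
Proof. by rewrite !B0E -big_split; apply: eq_bigr => i _; rewrite mxE mulrDl. Qed.

Lemma B0Zl (F : fieldType) n c (x z : 'rV[F]_(n.*2.+2)) :
  Bform n 0 (c *: x) z = c * Bform n 0 x z.
Proof. by rewrite !B0E mulr_sumr; apply: eq_bigr => i _; rewrite mxE mulrA. Qed.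

Lemma B0e (F : fieldType) n (k : 'I_(n.*2.+2)) (y : 'rV[F]_(n.*2.+2)) :
  Bform n 0 (delta_mx 0 k) y = y 0 (rev_ord k).
Proof.
rewrite B0E (bigD1 k) //= big1 ?addr0; first by rewrite mxE !eqxx mul1r.
by move=> i hi; rewrite mxE (negbTE hi) andbF mul0r.
Qed.

Lemma span_closed (K : fieldType) (vT : vectType K) (P : vT -> Prop) (X : seq vT) :
  P 0 -> (forall x y, P x -> P y -> P (x + y)) -> (forall c x, P x -> P (c *: x)) ->
  (forall x, x \in X -> P x) -> forall v, v \in <<X>>%VS -> P v.
Proof.
move=> P0 PD PZ PX v /(@coord_span _ _ _ (in_tuple X)) ->.
apply: (big_ind P) => // i _; apply: PZ; apply: PX; apply: mem_nth.
exact: ltn_ord.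
Qed.

Lemma span3P (K : fieldType) (vT : vectType K) (a b c v : vT) :
  reflect (exists x y z, v = x *: a + y *: b + z *: c) (v \in <<[:: a; b; c]>>%VS).
Proof.
rewrite !span_cons span_nil addv0.
apply: (iffP memv_addP) => [[va /vlineP[x ->] [w /memv_addP[vb /vlineP[y ->] [vc /vlineP[z ->] ->]] ->]]|].
  by exists x, y, z; rewrite addrA.
move=> [x [y [z ->]]]; exists (x *: a); first exact: memvZ (memv_line _).
exists (y *: b + z *: c); last by rewrite addrA.
by apply: memv_add; apply: memvZ; apply: memv_line.
Qed.

Lemma memDelta (F : fieldType) n (hn : (0 < n)%N) (x : 'rV[F]_(n.*2.+2)) :
  (x \in Delta F n) = (Xc x (n.*2) == 0) && (Xc x (n.*2.+1) == 0).
Proof.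
apply/idP/idP.
  move=> xD; apply/andP; move: x xD.
  apply: (span_closed (P := fun x => Xc x (n.*2) == 0 /\ Xc x (n.*2.+1) == 0)).
  - by rewrite !Xc0.
  - move=> x y [/eqP hx1 /eqP hx2] [/eqP hy1 /eqP hy2].
    by rewrite !XcD hx1 hx2 hy1 hy2 addr0.
  - by move=> c x [/eqP hx1 /eqP hx2]; rewrite !XcZ hx1 hx2 mulr0.
  move=> x /mapP[j]; rewrite mem_filter => /andP[/andP[j1 j2] _] ->.
  rewrite /Xc !mxE /=.
  have e1 : (inord (n.*2.-1) == j :> 'I__) = false.
    by apply/eqP => h; move: j1; rewrite -h /= inordK ?eqxx //; lia.
  have e2 : (inord (n.*2) == j :> 'I__) = false.
    by apply/eqP => h; move: j2; rewrite -h /= inordK ?eqxx //; lia.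
  by rewrite e1 e2.
move=> /andP[/eqP ha /eqP hb].
rewrite [x]row_sum_delta; apply: memv_suml => j _.
have [hj|hj] := boolP ((val j != (n.*2).-1) && (val j != n.*2)).
  apply: memvZ; apply: memv_span; apply/mapP; exists j => //.
  by rewrite mem_filter hj mem_enum.
move: hj; rewrite negb_and !negbK => /orP[] /eqP hj.
  have hx : x 0 j = 0.
    rewrite -ha /Xc; congr (x 0 _); apply: val_inj; rewrite /= inordK; [exact: hj | lia].
  rewrite hx.
  by rewrite scale0r mem0v.
have -> : x 0 j = 0 by rewrite -hb /Xc; congr (x 0 _); apply: val_inj; rewrite /= inordK; [exact: hj | lia].
by rewrite scale0r mem0v.
Qed.

Lemma W_Xc (F : fieldType) n (hn : (1 < n)%N) (a b : F) i :
  (0 < i <= n.*2.+2)%N -> i != 2%N -> i != 3%N ->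
  Xc (a *: delta_mx 0 (inord 1) + b *: delta_mx 0 (inord 2) : 'rV[F]_(n.*2.+2)) i = 0.
Proof.
move=> hi h2 h3; rewrite /Xc !mxE /=.
have e1 : (inord i.-1 == inord 1 :> 'I_(n.*2.+2)) = false.
  by apply/eqP => h; move: (congr1 val h); rewrite /= !inordK; lia.
have e2 : (inord i.-1 == inord 2 :> 'I_(n.*2.+2)) = false.
  by apply/eqP => h; move: (congr1 val h); rewrite /= !inordK; lia.
by rewrite e1 e2 !mulr0 addr0.
Qed.

Lemma W_q0 (F : fieldType) n (hn : (1 < n)%N) delta (a b : F) :
  Qform n delta 0 (a *: delta_mx 0 (inord 1) + b *: delta_mx 0 (inord 2) : 'rV[F]_(n.*2.+2)) = 0.
Proof.
rewrite /Qform mul0r addr0.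
rewrite (W_Xc hn a b (i := 1)); try lia.
rewrite (W_Xc hn a b (i := n.*2.+2)); try lia.
rewrite big_nat_cond big1 ?expr0n /= ?mulr0 ?addr0 //.
move=> i /andP[/andP[i1 i2] _].
rewrite (W_Xc hn a b (i := (n.*2.+3 - i))) ?mulr0 //; lia.
Qed.

Lemma W_B (F : fieldType) n (hn : (1 < n)%N) (a b : F) (k : 'rV[F]_(n.*2.+2)) :
  Xc k (n.*2) = 0 -> Xc k (n.*2.+1) = 0 ->
  Bform n 0 k (a *: delta_mx 0 (inord 1) + b *: delta_mx 0 (inord 2)) = 0.
Proof.
move=> ka kb; rewrite Bsplit.
rewrite (W_Xc hn a b (i := 1)); try lia.
rewrite (W_Xc hn a b (i := n.*2.+2)); try lia.
rewrite big_nat_cond big1; first by rewrite !mulr0 !addr0.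
move=> i /andP[/andP[i1 i2] _].
rewrite (W_Xc hn a b (i := (n.*2.+3 - i))) ?mulr0 ?add0r; try lia.
have [->|ne2] := eqVneq i 2%N.
  have -> : (n.*2.+3 - 2 = n.*2.+1)%N by lia.
  by rewrite kb mulr0.
have [->|ne3] := eqVneq i 3%N.
  have -> : (n.*2.+3 - 3 = n.*2)%N by lia.
  by rewrite ka mulr0.
rewrite (W_Xc hn a b (i := i)) ?mul0r //; lia.
Qed.

Lemma W_Bl (F : fieldType) n (hn : (1 < n)%N) (a b : F) (y : 'rV[F]_(n.*2.+2)) :
  Bform n 0 (a *: delta_mx 0 (inord 1) + b *: delta_mx 0 (inord 2)) y =
  a * Xc y (n.*2.+1) + b * Xc y (n.*2).
Proof.
rewrite B0Dl !B0Zl !B0e /Xc.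
congr (a * y 0 _ + b * y 0 _); apply: val_inj; rewrite /= !inordK; lia.
Qed.

Lemma vec_neq0 (F : fieldType) N (k : 'I_N) : (delta_mx 0 k : 'rV[F]_N) != 0.
Proof.
apply/eqP => h; have := congr1 (fun M : 'rV[F]_N => M 0 k) h.
by rewrite !mxE !eqxx /= => /eqP; rewrite oner_eq0.
Qed.

Unset Implicit Arguments.

Theorem mainTheorem5 (F : finFieldType) (n : nat) (delta mu : F)
  (hchar : (2 \in [pchar F])%N)
  (hn : (2 <= n)%N)
  (hdelta : irreducible_poly ('X^2 + 'X + delta%:P : {poly F}))
  (hmu : mu != 0)
  (g : {vspace 'rV[F]_(n.*2.+2)})
  (hg : is_generator n 0 g)
  (hgD : \dim (g :&: Delta F n) = n.-1) :
  exists V pi : {vspace 'rV[F]_(n.*2.+2)},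
    \dim V = (n - 2)%N /\
    nondeg_conic_in (Qform n delta mu) pi /\
    is_cone_in (Qform n delta mu) g V pi.
Proof.
move: hg => [dg Bg].
have n1 : (1 < n)%N := hn.
have n0 : (0 < n)%N by lia.
pose pi2 : 'Hom('rV[F]_(n.*2.+2), 'rV[F]_2) :=
  linfun (mulmxr (Sel (F := F) (fun j : 'I_2 => inord (n.*2.-1 + j) : 'I_(n.*2.+2)))).
have pa x : pi2 x 0 0 = Xc x (n.*2).
  by rewrite lfunE /= SelE /Xc; congr (x 0 (inord _)); rewrite /=; lia.
have pb x : pi2 x 0 1 = Xc x (n.*2.+1).
  by rewrite lfunE /= SelE /Xc; congr (x 0 (inord _)); rewrite /=; lia.
have pi0 x : (pi2 x == 0) = (Xc x (n.*2) == 0) && (Xc x (n.*2.+1) == 0).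
  apply/eqP/andP => [h|[/eqP h1 /eqP h2]].
    by rewrite -pa -pb h !mxE.
  apply/rowP => j; rewrite mxE; case: j => [[|[|j]] hj] //.
    have -> : Ordinal hj = 0 by apply: val_inj.
    by rewrite pa h1.
  have -> : Ordinal hj = 1 by apply: val_inj.
  by rewrite pb h2.
have DK : Delta F n = lker pi2.
  by apply/vspaceP => x; rewrite memv_ker memDelta // pi0.
have dI : \dim (pi2 @: g) = 2%N.
  have := limg_ker_dim pi2 g; rewrite -DK hgD dg; lia.
have img : (pi2 @: g)%VS = fullv.
  by apply/eqP; rewrite eqEdim subvf dimvf dim_matrix mul1r dI /=.
have /memv_imgP[p pg hp] : (delta_mx 0 0 : 'rV[F]_2) \in (pi2 @: g)%VS.
  by rewrite img memvf.
have /memv_imgP[r rg hr] : (delta_mx 0 1 : 'rV[F]_2) \in (pi2 @: g)%VS.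
  by rewrite img memvf.
have pA : Xc p (n.*2) = 1 by rewrite -pa -hp mxE.
have pB : Xc p (n.*2.+1) = 0 by rewrite -pb -hp mxE.
have rA : Xc r (n.*2) = 0 by rewrite -pa -hr mxE.
have rB : Xc r (n.*2.+1) = 1 by rewrite -pb -hr mxE.
set K := (g :&: Delta F n)%VS.
have memK x : (x \in K) = [&& x \in g, Xc x (n.*2) == 0 & Xc x (n.*2.+1) == 0].
  by rewrite memv_cap memDelta.
have Q00 : Qform n delta 0 0 = 0.
  by have := QZ delta 0 0 (0 : 'rV[F]_(n.*2.+2)); rewrite scale0r expr0n mul0r.
have [u uK qu] : exists2 u, u \in K & Qform n delta 0 u != 0.
  case: (boolP [exists u : 'rV[F]_(n.*2.+2), (u \in K) && (Qform n delta 0 u != 0)]).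
    by move=> /existsP[u /andP[uK qu]]; exists u.
  move=> /existsPn hall; exfalso.
  have hK x : x \in K -> Qform n delta 0 x = 0.
    by move=> xK; have := hall x; rewrite xK /= negbK => /eqP.
  pose e1 : 'rV[F]_(n.*2.+2) := delta_mx 0 (inord 1).
  pose e2 : 'rV[F]_(n.*2.+2) := delta_mx 0 (inord 2).
  pose W := (<[e1]> + <[e2]>)%VS.
  have memW w : w \in W -> exists a b, w = a *: e1 + b *: e2.
    by case/memv_addP => ? /vlineP[a ->] [? /vlineP[b ->] ->]; exists a, b.
  have hU t : t \in (K + W)%VS -> Qform n delta 0 t = 0.
    move=> /memv_addP[k kK [w /memW[a [b ->]] ->]].
    move: (kK); rewrite memK => /and3P[_ /eqP k1 /eqP k2].
    by rewrite Qpolar // hK // W_q0 // W_B // !addr0.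
  have := witt hchar hdelta hU.
  have KW : (K :&: W = 0)%VS.
    apply/eqP; rewrite -subv0; apply/subvP => w; rewrite memv_cap memv0.
    move=> /andP[wK /memW[a [b wE]]].
    move: (wK); rewrite memK => /and3P[wg _ _].
    have h1 := Bg _ _ wg pg; have h3 := Bg _ _ wg rg.
    rewrite wE W_Bl // pA pB in h1; rewrite wE W_Bl // rA rB in h3.
    move: h1 h3; rewrite !mulr0 !mulr1 add0r addr0 => hb ha.
    by rewrite wE ha hb !scale0r addr0.
  have dW : \dim W = 2%N.
    have := dimv_sum_cap <[e1]> <[e2]>.
    have -> : (<[e1]> :&: <[e2]> = 0)%VS.
      apply/eqP; rewrite -subv0; apply/subvP => x; rewrite memv_cap memv0.
      move=> /andP[/vlineP[a ->] /vlineP[b e]].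
      have := congr1 (fun M : 'rV[F]_(n.*2.+2) => M 0 (inord 1)) e.
      rewrite !mxE !eqxx /=.
      have -> : (inord 1 == inord 2 :> 'I_(n.*2.+2)) = false.
        by apply/eqP => h; move: (congr1 val h); rewrite /= !inordK; lia.
      by rewrite mulr1 mulr0 => ->; rewrite scale0r.
    by rewrite dimv0 addn0 !dim_vline !vec_neq0.
  have := dimv_sum_cap K W; rewrite KW dimv0 dW addn0 hgD.
  move=> ->; lia.
have dK : \dim K = n.-1 := hgD.
move: (uK); rewrite memK => /and3P[ug /eqP u2 /eqP u3].
have u0 : u != 0 by apply: contraNneq qu => ->; rewrite Q00.
have Bmu x y : x \in g -> y \in g -> Bform n mu x y =
    mu * (Xc x (n.*2) * Xc y (n.*2.+1) + Xc x (n.*2.+1) * Xc y (n.*2)).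
  by move=> xg yg; rewrite BformE Bg // add0r.
have corr x : x \in K -> exists c, (x - c *: u) \in K /\ Qform n delta 0 (x - c *: u) = 0.
  move=> xK; have [c hc] := sqrt_ex hchar (Qform n delta 0 x / Qform n delta 0 u).
  exists c; split; first by rewrite rpredB // memvZ.
  move: (xK); rewrite memK => /and3P[xg _ _].
  rewrite -scaleNr Qpolar // QZ sqrrN hc divfK // Bg ?memvZ // addr0.
  exact: addrr_pchar2.
pose V := <<[seq y <- enum 'rV[F]_(n.*2.+2) | (y \in K) && (Qform n delta 0%R y == 0%R)]>>%VS.
have memV y : (y \in V) = (y \in K) && (Qform n delta 0 y == 0).
  apply/idP/idP; last first.
    by move=> h; apply: memv_span; rewrite mem_filter h mem_enum.
  pose PV := fun y : 'rV[F]_(n.*2.+2) => (y \in K) && (Qform n delta 0 y == 0).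
  move=> hy; apply: (@span_closed _ _ (fun y => is_true (PV y)) _ _ _ _ _ _ hy); rewrite /PV.
  - by rewrite mem0v Q00 eqxx.
  - move=> x y1 /andP[xK /eqP qx] /andP[yK /eqP qy]; rewrite rpredD //=.
    move: (xK) (yK); rewrite !memK => /and3P[xg _ _] /and3P[yg _ _].
    by rewrite Qpolar // qx qy Bg // !add0r.
  - by move=> c x /andP[xK /eqP qx]; rewrite memvZ //= QZ qx mulr0 eqxx.
  - by move=> x; rewrite mem_filter => /andP[].
pose pi := <<[:: u; p; r]>>%VS.
have pig : (pi <= g)%VS.
  by apply/subvP => c /span3P[x [y [z ->]]]; rewrite !rpredD // memvZ.
have XcA x y z : Xc (x *: u + y *: p + z *: r) (n.*2) = y.
  by rewrite !XcD !XcZ u2 pA rA; ring.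
have XcB x y z : Xc (x *: u + y *: p + z *: r) (n.*2.+1) = z.
  by rewrite !XcD !XcZ u3 pB rB; ring.
have QVc v c : v \in V -> c \in g -> Qform n delta mu (v + c) = Qform n delta mu c.
  move=> /[dup] vV; rewrite memV => /andP[vK /eqP qv] cg.
  move: vK; rewrite memK => /and3P[vg /eqP v1 /eqP v2].
  rewrite Qpolar // Bmu // Qmu qv v1 v2; ring.
have Qu x : Qform n delta mu (x *: u) = x ^+ 2 * Qform n delta 0 u.
  rewrite QZ Qmu u2 u3; congr (_ * _); ring.
have decomp x : x \in g -> exists v c, [/\ v \in V, c \in pi & x = v + c].
  move=> xg; set a := Xc x (n.*2); set b := Xc x (n.*2.+1).
  have x'K : x - a *: p - b *: r \in K.
    rewrite memK !rpredB ?memvZ //= !XcD !XcN !XcZ pA pB rA rB.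
    by apply/andP; split; apply/eqP; rewrite /a /b; ring.
  have [c [vK qv]] := corr _ x'K.
  exists (x - a *: p - b *: r - c *: u), (c *: u + a *: p + b *: r); split.
  - by rewrite memV vK qv eqxx.
  - by apply/span3P; exists c, a, b.
  - by apply/rowP => k; rewrite !mxE; ring.
exists V, pi; split; [|split].
- have VuK : (V + <[u]> = K)%VS.
    apply/vspaceP => x; apply/idP/idP.
      case/memv_addP => v /[dup] vV; rewrite memV => /andP[vK _] [w /vlineP[c ->] ->].
      by rewrite rpredD // memvZ.
    move=> xK; have [c [vK qv]] := corr x xK; apply/memv_addP.
    exists (x - c *: u); first by rewrite memV vK qv eqxx.
    by exists (c *: u); [exact: memvZ (memv_line u) | rewrite subrK].
  have Vu0 : (V :&: <[u]> = 0)%VS.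
    apply/eqP; rewrite -subv0; apply/subvP => x; rewrite memv_cap memv0.
    move=> /andP[]; rewrite memV => /andP[_ /eqP qx] /vlineP[c xe].
    move: qx; rewrite xe QZ => /eqP; rewrite mulf_eq0 (negbTE qu) orbF expf_eq0 /=.
    by move=> /eqP ->; rewrite scale0r.
  have := dimv_sum_cap V <[u]>; rewrite VuK Vu0 dimv0 addn0 dim_vline u0 dK.
  move=> h; lia.
- split.
    have fr : free [:: u; p; r].
      rewrite free_cons (free_cons p) seq1_free !span_cons !span_nil !addv0.
      apply/and3P; split.
      + apply/negP => /memv_addP[? /vlineP[a ->] [? /vlineP[b ->] e]].
        move: u0; rewrite e => /negP; apply.
        have := congr1 (fun x => Xc x (n.*2)) e; have := congr1 (fun x => Xc x (n.*2.+1)) e.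
        rewrite /= !XcD !XcZ u2 u3 pA pB rA rB !mulr0 !mulr1 add0r addr0 => <- <-.
        by rewrite !scale0r addr0.
      + apply/negP => /vlineP[a e].
        by move: pA; rewrite e XcZ rA mulr0 => /eqP; rewrite eq_sym oner_eq0.
      + by apply/eqP => e; move: rB; rewrite e Xc0 => /eqP; rewrite eq_sym oner_eq0.
    by move: fr; rewrite /free => /eqP.
  move=> c /[dup] cpi /span3P[x [y [z ce]]] qc hpol.
  have cg : c \in g by apply: (subvP pig).
  have polE d : d \in g -> polarQ (Qform n delta mu) c d =
      mu * (Xc c (n.*2) * Xc d (n.*2.+1) + Xc c (n.*2.+1) * Xc d (n.*2)).
    by move=> dg'; rewrite /polarQ Qpolar // Bmu //; ring.
  have hpp : polarQ (Qform n delta mu) c p = 0.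
    by apply: hpol; apply: memv_span; rewrite !inE eqxx !orbT.
  have hrr : polarQ (Qform n delta mu) c r = 0.
    by apply: hpol; apply: memv_span; rewrite !inE eqxx !orbT.
  rewrite polE // ce XcA XcB pA pB mulr0 mulr1 add0r in hpp.
  rewrite polE // ce XcA XcB rA rB mulr0 mulr1 addr0 in hrr.
  move/eqP: hpp; rewrite mulf_eq0 (negbTE hmu) /= => /eqP z0.
  move/eqP: hrr; rewrite mulf_eq0 (negbTE hmu) /= => /eqP y0.
  move: qc; rewrite ce y0 z0 !scale0r !addr0 Qu => /eqP.
  rewrite mulf_eq0 (negbTE qu) orbF expf_eq0 /= => /eqP ->.
  by rewrite scale0r.
- split; [|split].
  + apply/directv_addP; apply/eqP; rewrite -subv0; apply/subvP => c.
    rewrite memv_cap memv0 => /andP[]; rewrite memV => /andP[cK /eqP qc].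
    move=> /span3P[x [y [z ce]]].
    move: cK; rewrite memK ce XcA XcB => /and3P[_ /eqP y0 /eqP z0].
    move: qc; rewrite ce y0 z0 !scale0r !addr0 QZ => /eqP.
    rewrite mulf_eq0 (negbTE qu) orbF expf_eq0 /= => /eqP ->.
    by rewrite scale0r.
  + apply/vspaceP => x; apply/idP/idP.
      case/memv_addP => v /[dup] vV; rewrite memV => /andP[vK _] [c cpi ->].
      move: vK; rewrite memK => /and3P[vg _ _].
      by rewrite rpredD // (subvP pig).
    move=> xg; have [v [c [vV cpi ->]]] := decomp x xg.
    exact: memv_add.
  + move=> x xg; split.
      move=> qx; have [v [c [vV cpi xe]]] := decomp x xg.
      exists v, c; split => //.
      by rewrite -(QVc v c) // ?(subvP pig) // -xe.
    by case=> v [c [vV cpi qc ->]]; rewrite QVc // (subvP pig).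
Qed.
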